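(* Let $G$ be a connected graph with minimum degree $\delta(G)\geq 3$, and let $v\in V(G)$. Suppose every vertex of $N_i(v)$ for $i=2,3,\ldots,\epsilon(v)-1$ has exactly two predecessors, each $N_i(v)$ is an independent set, and $|N_j(v)|=|N_{j-1}(v)|=|N_{j-2}(v)|=3$ for some index $3\le j\le \epsilon(v)-1$. Then $q(G)\geq 3$.
   Context: For a graph $G$ on $n$ vertices, $\mathcal{S}(G)$ is the set of real symmetric $n\times n$ matrices $A=[a_{ij}]$ with $a_{ij}\neq0$ for $i\ne j$ iff $\{i,j\}\in E(G)$ (diagonal unrestricted); $q(G)$ is the minimum number of distinct eigenvalues of a matrix in $\mathcal{S}(G)$. For $v\in V(G)$, $N_i(v)$ is the set of vertices at distance exactly $i$ from $v$, and $\epsilon(v)$ is the maximum distance from $v$ to a vertex of $G$. If $u\in N_{i-1}(v)$ and $w\in N_i(v)$ are adjacent, $u$ is a predecessor of $w$ and $w$ a successor of $u$. *)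

(* Defs.v *)
From mathcomp Require Import all_boot all_order all_algebra.
From mathcomp Require Import reals.
Set Implicit Arguments. Unset Strict Implicit. Unset Printing Implicit Defensive.
Import Order.TTheory GRing.Theory Num.Theory.

Section Graph.
Variable n : nat.
Variable e : rel 'I_n.

Definition simple_graph := symmetric e /\ irreflexive e.
Definition connected_graph := forall x y : 'I_n, connect e x y.
Definition min_degree_ge (k : nat) := forall x : 'I_n, k <= #|[set y | e x y]|.

Fixpoint ball (v : 'I_n) (k : nat) : {set 'I_n} :=
  match k with
  | 0 => [set v]
  | k'.+1 => ball v k' :|: [set y | [exists x in ball v k', e x y]]
  end.

(* graph distance (= n if unreachable, which cannot happen in a connected graph) *)
Definition dist (v w : 'I_n) : nat := find (fun k => w \in ball v k) (iota 0 n).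

Definition Nset (v : 'I_n) (i : nat) : {set 'I_n} := [set w | dist v w == i].

Definition ecc (v : 'I_n) : nat := \max_(w : 'I_n) dist v w.

(* predecessors of w (w is assumed in N_i(v)): adjacent vertices in N_{i-1}(v) *)
Definition preds (v : 'I_n) (i : nat) (w : 'I_n) : {set 'I_n} :=
  [set u in Nset v i.-1 | e u w].

Definition independent (S : {set 'I_n}) := forall x y, x \in S -> y \in S -> ~~ e x y.
End Graph.

Section Spectral.
Variable R : realType.
Local Open Scope ring_scope.

Definition inS (n : nat) (e : rel 'I_n) (A : 'M[R]_n) : Prop :=
  A^T = A /\ forall i j : 'I_n, i != j -> (A i j != 0) = e i j.

Definition num_distinct_eig (n : nat) (A : 'M[R]_n) (m : nat) : Prop :=
  exists s : seq R, [/\ uniq s, size s = m & forall a, eigenvalue A a <-> a \in s].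

Definition q_ge (n : nat) (e : rel 'I_n) (k : nat) : Prop :=
  forall A : 'M[R]_n, inS e A -> forall m, num_distinct_eig A m -> (k <= m)%N.
End Spectral.

(* Main.v *)
Require Import Defs.
From mathcomp Require Import all_boot all_order all_algebra.
From mathcomp Require Import reals.
From mathcomp Require Import complex spectral sesquilinear zify.
Import Order.TTheory GRing.Theory Num.Theory.
Set Implicit Arguments. Unset Strict Implicit. Unset Printing Implicit Defensive.

Section G.
Variables (n : nat) (e : rel 'I_n) (v : 'I_n).

Lemma dist_le w : dist e v w <= n.
Proof. by rewrite /dist; apply: leq_trans (find_size _ _) _; rewrite size_iota. Qed.

Lemma dist_ball w : dist e v w < n -> w \in ball e v (dist e v w).
Proof.
move=> H.
have := @nth_find _ 0 (fun k => w \in ball e v k) (iota 0 n).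
rewrite has_find size_iota => /(_ H).
by rewrite /dist nth_iota // -/(dist e v w).
Qed.

Lemma dist_min w k : k < n -> w \in ball e v k -> dist e v w <= k.
Proof.
move=> kn wk; rewrite leqNgt; apply/negP => lt.
have := @before_find _ 0 (fun k => w \in ball e v k) (iota 0 n) k lt.
by rewrite nth_iota // add0n wk.
Qed.

Lemma dist_edge x y : e x y -> dist e v y <= (dist e v x).+1.
Proof.
move=> exy; case: (ltnP (dist e v x) n) => [hx|hx]; last first.
  by apply: leq_trans (dist_le y) _; apply: leq_trans hx _.
have yb : y \in ball e v (dist e v x).+1.
  rewrite /= in_setU; apply/orP; right; rewrite inE; apply/existsP; exists x.
  by rewrite dist_ball.
case: (ltnP (dist e v x).+1 n) => h; first exact: dist_min.
exact: leq_trans (dist_le y) h.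
Qed.

Lemma dist0 w : dist e v w = 0 -> w = v.
Proof.
move=> h.
have n0 : 0 < n by apply: leq_ltn_trans (leq0n _) (ltn_ord v).
have := @dist_ball w; rewrite h => /(_ n0).
by rewrite /= inE => /eqP.
Qed.

Lemma layer x y : simple_graph e -> (forall i, independent e (Nset e v i)) ->
  e x y -> dist e v y = (dist e v x).+1 \/ dist e v x = (dist e v y).+1.
Proof.
move=> [sym irr] ind exy.
have h1 := dist_edge exy.
have h2 : dist e v x <= (dist e v y).+1 by apply: dist_edge; rewrite sym.
have hne : dist e v x != dist e v y.
  apply/eqP => eq.
  have := ind (dist e v x) x y; rewrite !inE eq eqxx => /(_ isT isT).
  by rewrite exy.
move: hne; rewrite neq_ltn => /orP [] h; [left|right]; apply/eqP; rewrite eqn_leq.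
  by rewrite h1 h.
by rewrite h2 h.
Qed.
End G.

Section Card.
Variable T : finType.
Lemma card2_mem (S : {set T}) a b k : #|S| = 2 -> a \in S -> b \in S -> a != b ->
  k \in S -> k = a \/ k = b.
Proof.
move=> cS aS bS ab kS.
have sub : [set a; b] \subset S.
  by apply/subsetP => x; rewrite !inE => /orP [] /eqP ->.
have /eqP eqS : [set a; b] == S by rewrite eqEcard sub cards2 ab cS.
by move: kS; rewrite -eqS !inE => /orP [] /eqP ->; [left|right].
Qed.

Lemma card3_mem (S : {set T}) a b c k : #|S| = 3 -> a \in S -> b \in S -> c \in S ->
  a != b -> a != c -> b != c -> k \in S -> [\/ k = a, k = b | k = c].
Proof.
move=> cS aS bS cS' ab ac bc kS.
have sub : [set a; b; c] \subset S.
  by apply/subsetP => x; rewrite !inE => /orP [/orP [] | ] /eqP ->.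
have /eqP eqS : [set a; b; c] == S.
  rewrite eqEcard sub cS.
  rewrite setUC cardsU1 cards2 !inE negb_or ab eq_sym ac eq_sym bc //.
by move: kS; rewrite -eqS !inE => /orP [/orP [] | ] /eqP ->; [constructor 1|constructor 2|constructor 3].
Qed.

Lemma miss_unique (X : {set T}) (P : pred T) : #|X| = 3 -> #|[set x in X | P x]| = 2 ->
  exists x0, [/\ x0 \in X, ~~ P x0 & forall x, x \in X -> ~~ P x -> x = x0].
Proof.
move=> cX cS.
have : #|X :\: [set x in X | P x]| = 1.
  rewrite cardsD (setIidPr _) ?cX ?cS //.
  by apply/subsetP => x; rewrite inE => /andP [].
move=> h1; have [x0 h] := cards1P (introT eqP h1).
have hx : forall x, (x \in X) && ~~ P x = (x == x0).
  move=> x; rewrite -in_set1 -h !inE; case: (x \in X); case: (P x) => //.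
exists x0; split.
- by have := hx x0; rewrite eqxx => /andP [].
- by have := hx x0; rewrite eqxx => /andP [].
- by move=> x xX nP; apply/eqP; rewrite -hx xX.
Qed.
End Card.

Section LA.
Local Open Scope ring_scope.
Lemma two_eig (R : realType) n (A : 'M[R]_n) (l1 l2 : R) :
  A^T = A -> (forall a, eigenvalue A a -> a = l1 \/ a = l2) ->
  (A - l1%:M) *m (A - l2%:M) = 0.
Proof.
move=> Asym Heig.
pose f := real_complex R.
pose Ac := map_mx f A.
have Ach : Ac \is hermsymmx.
  apply: realsym_hermsym.
    apply/is_hermitianmxP; rewrite expr0 scale1r map_mx_id //.
    rewrite /Ac; apply/matrixP => i j; rewrite !mxE.
    by have := congr1 (fun M : 'M[R]_n => M j i) Asym; rewrite mxE => ->.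
  by apply/mxOverP => i j; rewrite mxE; apply/complex_realP; exists (A i j).
have /orthomx_spectralP Aeq := hermitian_normalmx Ach.
have dreal := hermitian_spectral_diag_real Ach.
set P := spectralmx Ac in Aeq; set d := spectral_diag Ac in Aeq dreal.
have Pu : P \in unitmx by apply: spectral_unit.
have deig : forall i, d 0 i = f l1 \/ d 0 i = f l2.
  move=> i.
  have /complex_realP [r dr] : d 0 i \is Num.real by apply: (mxOverP dreal).
  suff : eigenvalue A r by rewrite dr => /Heig [] ->; [left|right].
  rewrite -(eigenvalue_map f) -/Ac.
  apply/eigenvalueP.
  exists (row i P).
    rewrite [in LHS]Aeq !mulmxA -row_mul mulmxV // row1.
    rewrite -rowE row_diag_mx -scalemxAl -rowE dr //.
  apply/eqP => /(congr1 (mulmx ^~ (invmx P))).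
  rewrite -row_mul mulmxV // row1 mul0mx => /matrixP /(_ 0 i).
  rewrite !mxE !eqxx /= => /eqP; by rewrite oner_eq0.
apply: (@map_mx_inj _ _ f).
rewrite map_mxM !map_mxB !map_scalar_mx map_mx0 -/Ac Aeq.
have conj c : invmx P *m diag_mx d *m P - c%:M
             = invmx P *m diag_mx (\row_j (d 0 j - c)) *m P.
  have -> : diag_mx (\row_j (d 0 j - c)) = diag_mx d - c%:M.
    by apply/matrixP => a b; rewrite !mxE; case: eqP => [->|]; rewrite ?mulr1n ?mulr0n ?subrr.
  by rewrite mulmxBr mulmxBl mul_mx_scalar -scalemxAl mulVmx // scalemx1.
rewrite !conj -!mulmxA (mulmxA P) mulmxV // mul1mx (mulmxA (diag_mx _)) mulmx_diag.
suff -> : (\row_j ((\row_j0 (d 0 j0 - f l1)) 0 j * (\row_j0 (d 0 j0 - f l2)) 0 j)) = 0.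
  by rewrite (_ : diag_mx 0 = 0) ?mul0mx ?mulmx0 //; apply/matrixP => a b; rewrite !mxE mul0rn.
apply/rowP => j; rewrite !mxE.
by case: (deig j) => ->; rewrite subrr ?mul0r ?mulr0.
Qed.
End LA.

Unset Implicit Arguments.

Theorem mainTheorem6 (R : realType) (n : nat) (e : rel 'I_n) (v : 'I_n) :
  simple_graph e ->
  connected_graph e ->
  min_degree_ge e 3 ->
  (forall i, 2 <= i <= (ecc e v).-1 ->
     forall w, w \in Nset e v i -> #|preds e v i w| = 2) ->
  (forall i, independent e (Nset e v i)) ->
  (exists j, [/\ 3 <= j <= (ecc e v).-1, #|Nset e v j| = 3,
                 #|Nset e v j.-1| = 3 & #|Nset e v j.-2| = 3]) ->
  q_ge R e 3.
Proof.
move=> sg conn deg hpred ind [j [/andP [j3 jecc] cZ cY cX]].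
have [sym irr] := sg.
have [j' jE] : exists j', j = j'.+3 by exists (j - 3); rewrite -addn3 subnK.
subst j; simpl in cY, cX.
move=> A [At Aoff] m [s [us ss hs]].
rewrite leqNgt; apply/negP => m2.
have [l1 [l2 Hl]] : exists l1 l2 : R, forall a, eigenvalue A a -> a = l1 \/ a = l2.
  case: s us ss hs => [|a [|b [|c s]]] _ ss hs.
  - by exists 0%R, 0%R => x /hs; rewrite in_nil.
  - by exists a, a => x /hs; rewrite inE => /eqP ->; left.
  - by exists a, b => x /hs; rewrite !inE => /orP [] /eqP ->; [left|right].
  - by rewrite -ss in m2.
have E := two_eig At Hl.
have L : forall u w c, u != w -> ~~ e u w -> (forall k, e u k && e k w = (k == c)) -> False.
  move=> u w c uw nuw hc.
  have Auw : A u w = 0%R by apply/eqP; rewrite -[_ == 0%R]negbK Aoff // (negbTE nuw).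
  have A2 : (mulmx A A) u w = 0%R.
    move: E => /(congr1 (fun M : 'M[R]_n => M u w)).
    rewrite mulmxBl !mulmxBr !mul_mx_scalar !mul_scalar_mx !mxE Auw (negbTE uw) mulr0n !mulr0 !subr0.
    by [].
  have zero : forall k, k != c -> (A u k * A k w = 0)%R.
    move=> k kc; case: (eqVneq k w) => [->|kw]; first by rewrite Auw mul0r.
    case: (eqVneq u k) => [<-|uk]; first by rewrite Auw mulr0.
    case euk: (e u k).
      have nkw : ~~ e k w by have := hc k; rewrite euk (negbTE kc) /= => ->.
      have -> : A k w = 0%R by apply/eqP; rewrite -[_ == 0%R]negbK Aoff // (negbTE nkw).
      by rewrite mulr0.
    have -> : A u k = 0%R by apply/eqP; rewrite -[_ == 0%R]negbK Aoff // euk.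
    by rewrite mul0r.
  rewrite mxE (bigD1 c) //= big1 ?addr0 in A2; last by move=> k /zero.
  have := hc c; rewrite eqxx => /andP [euc ecw].
  have uc : u != c by apply/eqP => uc; move: euc; rewrite uc irr.
  have cw : c != w by apply/eqP => cw; move: ecw; rewrite cw irr.
  have h1 : (A u c != 0)%R by rewrite Aoff.
  have h2 : (A c w != 0)%R by rewrite Aoff.
  by move/eqP: A2; rewrite mulf_eq0 (negbTE h1) (negbTE h2).
have lay := @layer n e v.
have predY : forall y, dist e v y = j'.+2 -> #|[set x in Nset e v j'.+1 | e x y]| = 2.
  move=> y dy; apply: (hpred j'.+2); last by rewrite inE dy.
  by rewrite /= ltnW.
have predZ : forall z, dist e v z = j'.+3 -> #|[set u in Nset e v j'.+2 | e u z]| = 2.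
  move=> z dz; apply: (hpred j'.+3); last by rewrite inE dz.
  by rewrite /= jecc.
have predX : forall x, dist e v x = j'.+1 -> #|[set u in Nset e v j' | e u x]| <= 2.
  move=> x dx; clear j3; case: j' jecc cY cX cZ predY predZ dx => [|k] jecc cY cX cZ predY predZ dx.
    apply: leq_trans (_ : #|[set v]| <= 2); last by rewrite cards1.
    apply: subset_leq_card; apply/subsetP => u; rewrite !inE => /andP [/eqP /dist0 -> _].
    by rewrite eqxx.
  rewrite (hpred k.+2) //; last by rewrite inE dx.
  by rewrite /= (leq_trans _ jecc) // ltnW // ltnW.
have degc : forall w (S : {set 'I_n}), (forall k, e w k -> k \in S) -> #|S| <= 2 -> False.
  move=> w S hS cS.
  have sub : [set k | e w k] \subset S by apply/subsetP => k; rewrite inE; apply: hS.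
  have := leq_trans (deg w) (leq_trans (subset_leq_card sub) cS).
  by [].
have succ : forall y, dist e v y = j'.+2 -> exists z, dist e v z = j'.+3 /\ e y z.
  move=> y dy.
  case: (pickP (fun z => (dist e v z == j'.+3) && e y z)) => [z /andP [/eqP dz eyz] | none].
    by exists z.
  exfalso; apply: (degc y _ _ (eq_leq (predY y dy))) => k eyk.
  case: (lay y k sg ind eyk) => h.
    by have := none k; rewrite h dy eqxx eyk.
  rewrite dy in h; case: h => h.
  by rewrite !inE h eqxx sym eyk.
have K : forall z y1 y2, dist e v z = j'.+3 -> dist e v y1 = j'.+2 -> dist e v y2 = j'.+2 ->
    y1 != y2 -> e y1 z -> e y2 z -> forall x, dist e v x = j'.+1 -> e x y1 = e x y2.
  move=> z y1 y2 dz dy1 dy2 y12 ey1z ey2z.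
  have [x1 [x1X nx1 ux1]] := miss_unique cX (predY y1 dy1).
  have [x2 [x2X nx2 ux2]] := miss_unique cX (predY y2 dy2).
  have x12 : x1 = x2.
    apply/eqP/negP => /negP x12.
    have ex1y2 : e x1 y2.
      by apply/negP => /negP h; move: x12; rewrite (ux2 x1 x1X h) eqxx.
    move: x1X; rewrite inE => /eqP dx1.
    apply: (L x1 z y2).
    - by apply/eqP => h; move: dx1; rewrite h dz; clear; lia.
    - by apply/negP => ex1z; case: (lay x1 z sg ind ex1z); rewrite dx1 dz; clear; lia.
    - move=> k; apply/idP/eqP; last by move=> ->; rewrite ex1y2 ey2z.
      move=> /andP [exk ekz].
      have dk : dist e v k = j'.+2.
        by case: (lay x1 k sg ind exk); case: (lay k z sg ind ekz); rewrite dx1 dz => h1 h2; move: h1 h2; clear; lia.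
      have kS : k \in [set u in Nset e v j'.+2 | e u z] by rewrite !inE dk eqxx ekz.
      have y1S : y1 \in [set u in Nset e v j'.+2 | e u z] by rewrite !inE dy1 eqxx ey1z.
      have y2S : y2 \in [set u in Nset e v j'.+2 | e u z] by rewrite !inE dy2 eqxx ey2z.
      case: (card2_mem (predZ z dz) y1S y2S y12 kS) => // ky1.
      by move: nx1; rewrite -ky1 exk.
  move=> x dx.
  have xX : x \in Nset e v j'.+1 by rewrite inE dx.
  case: (eqVneq x x1) => [->|xx1].
    by rewrite (negbTE nx1) x12 (negbTE nx2).
  have h1 : e x y1 by apply/negP => /negP h; move: xx1; rewrite (ux1 x xX h) eqxx.
  have h2 : e x y2 by apply/negP => /negP h; move: xx1; rewrite x12 (ux2 x xX h) eqxx.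
  by rewrite h1 h2.
have partner : forall y, dist e v y = j'.+2 -> exists y', [/\ dist e v y' = j'.+2, y' != y &
    forall x, dist e v x = j'.+1 -> e x y = e x y'].
  move=> y dy; have [z [dz eyz]] := succ y dy.
  have yS : y \in [set u in Nset e v j'.+2 | e u z] by rewrite !inE dy eqxx eyz.
  have : 0 < #|[set u in Nset e v j'.+2 | e u z] :\ y|.
    by move: (cardsD1 y [set u in Nset e v j'.+2 | e u z]); rewrite yS predZ // add1n => -[<-].
  move=> /card_gt0P [y' hy']; move: hy'; rewrite !inE => /andP [y'y /andP [/eqP dy' ey'z]].
  exists y'; split => //.
  by apply: (K z) => //; rewrite eq_sym.
have [y1 y1Y] : exists y1, y1 \in Nset e v j'.+2.
  by apply/card_gt0P; rewrite cY.
move: (y1Y); rewrite inE => /eqP dy1.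
have [x0 [x0X nx0 ux0]] := miss_unique cX (predY y1 dy1).
move: (x0X); rewrite inE => /eqP dx0.
have allY : forall y, dist e v y = j'.+2 -> ~~ e x0 y.
  move=> y dy; apply/negP => ex0y.
  have [p1 [dp1 p1y1 hp1]] := partner y1 dy1.
  have [p [dp py hp]] := partner y dy.
  have yy1 : y1 != y by apply/eqP => h; move: nx0; rewrite h ex0y.
  have p1y : p1 != y by apply/eqP => h; move: nx0; rewrite (hp1 x0 dx0) h ex0y.
  have Y1 : y1 \in Nset e v j'.+2 by rewrite inE dy1.
  have P1 : p1 \in Nset e v j'.+2 by rewrite inE dp1.
  have Yy : y \in Nset e v j'.+2 by rewrite inE dy.
  have Pp : p \in Nset e v j'.+2 by rewrite inE dp.
  have y1p1 : y1 != p1 by rewrite eq_sym.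
  case: (card3_mem cY Y1 P1 Yy y1p1 yy1 p1y Pp) => h.
  - by move: nx0; rewrite -h -(hp x0 dx0) ex0y.
  - by move: nx0; rewrite (hp1 x0 dx0) -h -(hp x0 dx0) ex0y.
  - by move: py; rewrite h eqxx.
apply: (degc x0 _ _ (predX x0 dx0)) => k ex0k.
case: (lay x0 k sg ind ex0k) => h.
  by move: (allY k); rewrite h dx0 ex0k => /(_ erefl).
rewrite dx0 in h; case: h => h.
by rewrite !inE h eqxx sym ex0k.
Qed.
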